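(* Let $E=E(R/\mathfrak m)$ and $N^\circ=\mathrm{Hom}_R(N,E)$ for an $R$-module $N$. Then: (a) if $N^\circ$ is strongly prime, then $N$ is strongly coprime; (b) if $N^\circ$ is strongly coprime, then $N$ is strongly prime; (c) if $N$ is reflexive (the canonical map $N\to N^{\circ\circ}$ is an isomorphism), the converses of (a) and (b) hold as well.
   Context: $R$ is a commutative Noetherian local ring with maximal ideal $\mathfrak m$, $E(R/\mathfrak m)$ the injective hull of $R/\mathfrak m$. A module $M\ne0$ is strongly prime if every nonzero $R$-endomorphism of $M$ is injective; a module $N\neq0$ is strongly coprime if every nonzero $R$-endomorphism of $N$ is surjective. *)

(* Defs.v *)
From HB Require Import structures.
From mathcomp Require Import all_boot all_order all_algebra.
From mathcomp Require Import boolp classical_sets functions.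
Set Implicit Arguments.
Unset Strict Implicit.
Unset Printing Implicit Defensive.
Import GRing.Theory.
Local Open Scope ring_scope.
Local Open Scope classical_set_scope.

Section Modules.
Variable R : comNzRingType.

Definition is_ideal (I : set R) : Prop :=
  [/\ I 0, (forall x y, I x -> I y -> I (x + y)) &
      (forall r x, I x -> I (r * x))].

Definition is_maximal_ideal (m : set R) : Prop :=
  [/\ is_ideal m, ~ m 1 &
      forall J : set R, is_ideal J -> ~ J 1 -> m `<=` J -> J = m].

Definition noetherian_ring : Prop :=
  forall I : nat -> set R, (forall n, is_ideal (I n)) ->
    (forall n, I n `<=` I n.+1) ->
    exists n, forall k, (n <= k)%N -> I k = I n.

Definition local_ring_with_max (m : set R) : Prop :=
  is_maximal_ideal m /\ forall J, is_maximal_ideal J -> J = m.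

Definition nonzero_module (M : lmodType R) : Prop := exists x : M, x != 0.

Definition is_submodule (M : lmodType R) (S : set M) : Prop :=
  [/\ S 0, (forall x y, S x -> S y -> S (x + y)) &
      (forall (r : R) x, S x -> S (r *: x))].

(* K is (isomorphic to) the cyclic module R/m *)
Definition residue_module (m : set R) (K : lmodType R) : Prop :=
  exists e : K, (forall x : K, exists r : R, x = r *: e) /\
                (forall r : R, r *: e = 0 <-> m r).

Definition injective_module (E : lmodType R) : Prop :=
  forall (A B : lmodType R) (i : {linear A -> B}) (g : {linear A -> E}),
    injective i -> exists h : {linear B -> E}, forall a, h (i a) = g a.

Definition injective_hull (K E : lmodType R) : Prop :=
  injective_module E /\
  exists j : {linear K -> E}, injective j /\
    forall S : set E, is_submodule S -> (exists x, S x /\ x != 0) ->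
      exists k : K, k != 0 /\ S (j k).

Definition strongly_prime (M : lmodType R) : Prop :=
  nonzero_module M /\
  forall f : {linear M -> M}, (exists x, f x != 0) -> injective f.

Definition strongly_coprime (M : lmodType R) : Prop :=
  nonzero_module M /\
  forall f : {linear M -> M}, (exists x, f x != 0) ->
    forall y, exists x, f x = y.

Definition linpred (N E : lmodType R) : {pred N -> E} :=
  fun f => `[< linear f >].

Lemma linpred_closed (N E : lmodType R) : subsemimod_closed (@linpred N E).
Proof.
split; [split|].
- by apply/asboolP => a u v; rewrite /= scaler0 addr0.
- move=> f g /asboolP lf /asboolP lg; apply/asboolP => a u v /=.
  change (f (a *: u + v) + g (a *: u + v) =
          a *: (f u + g u) + (f v + g v)).
  by rewrite lf lg scalerDr addrACA.
- move=> r f /asboolP lf; apply/asboolP => a u v /=.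
  change (r *: f (a *: u + v) = a *: (r *: f u) + r *: f v).
  by rewrite lf scalerDr !scalerA mulrC.
Qed.

Record HomR (N E : lmodType R) :=
  MkHom { hom_app : N -> E; hom_lin : linpred hom_app }.
HB.instance Definition _ (N E : lmodType R) := [isSub for @hom_app N E].
HB.instance Definition _ (N E : lmodType R) := [Choice of HomR N E by <:].
HB.instance Definition _ (N E : lmodType R) :=
  GRing.SubChoice_isSubLmodule.Build R (N -> E) (@linpred N E) (HomR N E)
    (@linpred_closed N E).


Lemma ev_linear (N E : lmodType R) (n : N) :
  linpred (fun g : HomR N E => hom_app g n).
Proof. by apply/asboolP => a u v. Qed.

Definition ev_map (N E : lmodType R) (n : N) : HomR (HomR N E) E :=
  @MkHom (HomR N E) E (fun g : HomR N E => hom_app g n) (@ev_linear N E n).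

(* N is reflexive: the canonical map N -> N°° is an isomorphism
   (it is always R-linear, so this amounts to bijectivity) *)
Definition reflexive_module (N E : lmodType R) : Prop :=
  bijective (@ev_map N E).

End Modules.
Coercion hom_app : HomR >-> Funclass.

(* Main.v *)
Require Import Defs.
From HB Require Import structures.
From mathcomp Require Import all_boot all_order all_algebra.
From mathcomp Require Import boolp classical_sets functions.
Set Implicit Arguments. Unset Strict Implicit. Unset Printing Implicit Defensive.
Import GRing.Theory.
Local Open Scope ring_scope.
Local Open Scope classical_set_scope.

Definition mkLin (R : comNzRingType) (U V : lmodType R) (f : U -> V)
  (pf : linear f) : {linear U -> V} :=
  HB.pack f (GRing.isLinear.Build R U V *:%R f pf).

Section Sp.
Variables (R : comNzRingType) (M : lmodType R) (S : set M) (y : M).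
Hypothesis hS : is_submodule S.
Definition spanpred : {pred M} := fun z => let _ := hS in `[< exists s r, S s /\ z = s + r *: y >].
Lemma spanpred_closed : subsemimod_closed spanpred.
Proof.
case: hS => S0 SD SZ.
split; [split|].
- by apply/asboolP; exists 0, 0; rewrite scale0r addr0.
- move=> u v /asboolP [s1 [r1 [h1 ->]]] /asboolP [s2 [r2 [h2 ->]]].
  apply/asboolP; exists (s1 + s2), (r1 + r2); split; first exact: SD.
  by rewrite scalerDl addrACA.
- move=> a u /asboolP [s1 [r1 [h1 ->]]]; apply/asboolP.
  exists (a *: s1), (a * r1); split; first exact: SZ.
  by rewrite scalerDr scalerA.
Qed.
Record Span := MkSpan { spval : M; spP : spanpred spval }.
HB.instance Definition _ := [isSub for spval].
HB.instance Definition _ := [Choice of Span by <:].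
HB.instance Definition _ :=
  GRing.SubChoice_isSubLmodule.Build R M spanpred Span spanpred_closed.
Lemma spval_lin : linear spval.
Proof. by move=> a u v. Qed.
End Sp.
Section H.
Variable R : comNzRingType.

Lemma max_ideal_exists (hN : noetherian_ring R) (I : set R) :
  is_ideal I -> ~ I 1 -> exists J, is_maximal_ideal J /\ I `<=` J.
Proof.
move=> hI hI1; apply: contrapT => hno.
pose P (J : set R) := exists J2 : set R, [/\ is_ideal J2, ~ J2 1, J `<=` J2 & J2 <> J].
pose step (J : set R) : set R := if pselect (P J) is left p then projT1 (cid p) else J.
have key : forall J, is_ideal J -> ~ J 1 -> I `<=` J ->
   [/\ is_ideal (step J), ~ step J 1, J `<=` step J & step J <> J].
  move=> J hJ hJ1 hIJ; have PJ : P J.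
    apply: contrapT => nP; apply: hno; exists J; split => //; split => //.
    move=> J2 h2 h21 hJJ2; apply: contrapT => ne; apply: nP; exists J2; by split.
  rewrite /step; case: pselect => // p; by case: (projT2 (cid p)).
pose ch n := iter n step I.
have hch : forall n, [/\ is_ideal (ch n), ~ ch n 1 & I `<=` ch n].
  elim=> [|n [a b c]] /=; first by split.
  case: (key _ a b c) => a' b' c' _; split => //; exact: subset_trans c'.
have [n hn] : exists n, forall k, (n <= k)%N -> ch k = ch n.
  apply: hN; first by move=> n; case: (hch n).
  by move=> n; case: (hch n) => a b c; case: (key _ a b c).
case: (hch n) => a b c; case: (key _ a b c) => _ _ _; apply.
by have := hn n.+1 (leqnSn n).
Qed.
End H.

Lemma ideal_sub (R : comNzRingType) (I : set R) : is_ideal I ->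
  forall x y, I x -> I y -> I (x - y).
Proof. case=> _ D Mu x y hx hy; apply: D => //; rewrite -mulN1r; exact: Mu. Qed.

Lemma separate (R : comNzRingType) (m : set R)
  (hN : noetherian_ring R) (hloc : local_ring_with_max m)
  (K E : lmodType R) (hK : residue_module m K) (hE : injective_hull K E)
  (M : lmodType R) (S : set M) (y : M) :
  is_submodule S -> ~ S y ->
  exists h : {linear M -> E}, (forall s, S s -> h s = 0) /\ h y != 0.
Proof.
move=> hS nSy.
have mI : is_ideal m by case: hloc => [[]].
have m1 : ~ m 1 by case: hloc => [[]].
pose I := fun r : R => S (r *: y).
have hI : is_ideal I.
  case: hS => S0 SD SZ; split.
  - by rewrite /I scale0r.
  - by move=> a b ha hb; rewrite /I scalerDl; exact: SD.
  - by move=> a b hb; rewrite /I -scalerA; exact: SZ.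
have I1 : ~ I 1 by rewrite /I scale1r.
have Im : I `<=` m.
  have [J [hJ IJ]] := max_ideal_exists hN hI I1.
  by rewrite -(hloc.2 J hJ).
have [e [_ he]] := hK.
have [hinj [j [jinj _]]] := hE.
pose e' := j e.
have me : forall r, m r -> r *: e' = 0.
  by move=> r /he hr; rewrite /e' -linearZ hr linear0.
have eqm : forall a b, m (a - b) -> a *: e' = b *: e'.
  by move=> a b /me; rewrite scalerBl => /eqP; rewrite subr_eq0 => /eqP.
have Ssub : forall u v, S u -> S v -> S (u - v).
  case: hS => _ SD SZ u v hu hv; apply: SD => //; rewrite -scaleN1r; exact: SZ.
have [S0 SD SZ] := hS.
pose T := @Span R M S y hS.
have exr : forall z : T, exists r, exists s, S s /\ spval z = s + r *: y.
  move=> z; have /asboolP [s [r [h1 h2]]] := spP z; by exists r, s.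
pose rep (z : T) : R := projT1 (cid (exr z)).
have rep_spec : forall (z : T) r s, S s -> spval z = s + r *: y -> m (rep z - r).
  move=> z r s hs hz; apply: Im; rewrite /I.
  have [s0 [hs0 hz0]] := projT2 (cid (exr z)).
  rewrite -/(rep z) in hz0.
  have -> : (rep z - r) *: y = s - s0.
    have e1 : s0 + rep z *: y = s + r *: y by rewrite -hz0 hz.
    have -> : s = s0 + rep z *: y - r *: y by rewrite e1 addrK.
    by rewrite scalerBl addrAC (addrC s0) addrK.
  exact: Ssub.
pose g (z : T) : E := rep z *: e'.
have glin : linear g.
  move=> a u v; rewrite /g scalerA -scalerDl; apply: eqm.
  have [su [hsu hu]] := projT2 (cid (exr u)).
  have [sv [hsv hv]] := projT2 (cid (exr v)).
  apply: (rep_spec _ _ (a *: su + sv)).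
    apply: SD => //; exact: SZ.
  rewrite /= -/(rep u) -/(rep v) in hu hv.
  change (a *: spval u + spval v = a *: su + sv + (a * rep u + rep v) *: y).
  rewrite hu hv scalerDl -scalerA scalerDr; rewrite -!addrA; congr (_ + _).
  by rewrite addrCA.
pose i := mkLin (@spval_lin R M S y hS).
have iinj : injective i by move=> u v; exact: val_inj.
have [h hh] := hinj T M i (mkLin glin) iinj.
exists h; split.
- move=> s hs.
  have sP : @spanpred R M S y hS s by rewrite /spanpred /=; apply/asboolP; exists s, 0; rewrite scale0r addr0.
  have := hh (@MkSpan R M S y hS s sP); rewrite /= => ->.
  rewrite /g (eqm _ 0) ?scale0r //; rewrite subr0.
  have H := rep_spec (@MkSpan R M S y hS s sP) 0 s hs; rewrite subr0 in H; apply: H; by rewrite scale0r addr0.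
- have yP : @spanpred R M S y hS y by rewrite /spanpred /=; apply/asboolP; exists 0, 1; rewrite scale1r add0r.
  have := hh (@MkSpan R M S y hS y yP); rewrite /= => ->.
  rewrite /g; apply/eqP => h0.
  have r1 : m (rep (@MkSpan R M S y hS y yP) - 1).
    apply: (rep_spec _ _ 0); first by [].
    by rewrite scale1r add0r.
  have r0 : m (rep (@MkSpan R M S y hS y yP)).
    apply/he; apply: jinj; rewrite linearZ linear0; exact: h0.
  apply: m1; have := ideal_sub mI r0 r1; by rewrite opprB addrC subrK.
Qed.

Section Hom.
Variables (R : comNzRingType).

Lemma homlin (N E : lmodType R) (g : HomR N E) : linear g.
Proof. by have /asboolP := hom_lin g. Qed.

Lemma hom_app0 (N E : lmodType R) (g : HomR N E) : g 0 = 0.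
Proof. exact: (linear0 (mkLin (homlin g))). Qed.

Lemma hom_eq (N E : lmodType R) (g1 g2 : HomR N E) :
  (forall x, g1 x = g2 x) -> g1 = g2.
Proof. by move=> h; apply: val_inj; apply: funext. Qed.

Definition toHom (N E : lmodType R) (h : {linear N -> E}) : HomR N E :=
  @MkHom R N E h (asboolT (@linearP _ _ _ _ h)).

Lemma hom_ne0 (N E : lmodType R) (g : HomR N E) :
  g != 0 -> exists x, g x != 0.
Proof.
move=> gn; apply: contrapT => hn; move/eqP: gn; apply; apply: hom_eq => x.
by apply: contrapT => hx; apply: hn; exists x; apply/eqP.
Qed.

Lemma comp_lin (U V E : lmodType R) (f : {linear U -> V}) (g : HomR V E) :
  linear (fun u => g (f u)).
Proof. by move=> a u v /=; rewrite linearP homlin. Qed.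

Definition dualf (U V E : lmodType R) (f : {linear U -> V}) (g : HomR V E) : HomR U E :=
  toHom (mkLin (comp_lin f g)).

Lemma dualfE (U V E : lmodType R) (f : {linear U -> V}) (g : HomR V E) x :
  dualf f g x = g (f x).
Proof. by []. Qed.

Lemma dualf_lin (U V E : lmodType R) (f : {linear U -> V}) : linear (@dualf U V E f).
Proof. by move=> a g1 g2; apply: hom_eq => x. Qed.

Definition dualL (U V E : lmodType R) (f : {linear U -> V}) :=
  mkLin (@dualf_lin U V E f).

Lemma lin_comp (U V W : lmodType R) (F : {linear V -> W}) (G : {linear U -> V}) :
  linear (fun x => F (G x)).
Proof. by move=> a u v; rewrite !linearP. Qed.

Lemma homDZ (N E : lmodType R) (a : R) (g1 g2 : HomR N E) x :
  (a *: g1 + g2) x = a *: g1 x + g2 x.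
Proof. by []. Qed.
End Hom.

Theorem lemma2p2 (R : comNzRingType) (m : set R)
  (hNoeth : noetherian_ring R) (hloc : local_ring_with_max m)
  (K E : lmodType R) (hK : residue_module m K) (hE : injective_hull K E)
  (N : lmodType R) :
  (strongly_prime (HomR N E) -> strongly_coprime N) /\
  (strongly_coprime (HomR N E) -> strongly_prime N) /\
  (reflexive_module N E ->
     (strongly_coprime N -> strongly_prime (HomR N E)) /\
     (strongly_prime N -> strongly_coprime (HomR N E))).
Proof.
have sep := separate hNoeth hloc hK hE.
have sep0 : forall (M : lmodType R) (x : M), x != 0 ->
    exists h : {linear M -> E}, h x != 0.
  move=> M x xn.
  have s0 : is_submodule [set (0 : M)].
    split => //; first by move=> u v -> ->; rewrite addr0.
    by move=> r u ->; rewrite scaler0.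
  have nx : ~ [set (0:M)] x by move=> hx; move/eqP: xn.
  have [h [_ hh]] := sep M _ x s0 nx; by exists h.
have nzN : nonzero_module (HomR N E) -> nonzero_module N.
  case=> G /hom_ne0 [x hx]; exists x; apply: contraNneq hx => ->.
  by rewrite hom_app0.
have nzH : nonzero_module N -> nonzero_module (HomR N E).
  case=> x /sep0 [h hh]; exists (toHom h); apply: contraNneq hh => h0.
  by have := congr1 (fun g : HomR N E => g x) h0 => /= ->.
have dnz : forall f : {linear N -> N}, (exists x, f x != 0) ->
    exists g, dualL E f g != 0.
  move=> f [x /sep0 [h hh]]; exists (toHom h); apply: contraNneq hh => h0.
  by have := congr1 (fun g : HomR N E => g x) h0 => /= ->.
split; [|split].
- case=> nz SP; split; first exact: nzN.
  move=> f /dnz [g0 hg0].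
  have inj := SP (dualL E f) (ex_intro _ g0 hg0).
  move=> y; apply: contrapT => ny.
  have sr : is_submodule (range f).
    split; first by exists 0 => //; rewrite linear0.
    * by move=> _ _ [a _ <-] [b _ <-]; exists (a + b) => //; rewrite linearD.
    * by move=> r _ [a _ <-]; exists (r *: a) => //; rewrite linearZ.
  have nr : ~ range f y by move=> [x _ hx]; apply: ny; exists x.
  have [h [h0 hy]] := sep N _ y sr nr.
  move/eqP: hy; apply; have : dualL E f (toHom h) = dualL E f 0.
    by apply: hom_eq => x; rewrite linear0 /= h0 //; exists x.
  by move/inj => H0; have := congr1 (fun g : HomR N E => g y) H0.
- case=> nz SC; split; first exact: nzN.
  move=> f /dnz [g0 hg0] a b fab.
  apply/eqP; rewrite -subr_eq0; apply/negPn/negP => /sep0 [h hh].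
  have [G hG] := SC (dualL E f) (ex_intro _ g0 hg0) (toHom h).
  move/eqP: hh; apply.
  have -> : h (a - b) = toHom h (a - b) by [].
  rewrite -hG; change (G (f (a - b)) = 0); by rewrite linearB /= fab subrr hom_app0.
- move=> [evinv evK evK'].
  have evlin : linear (@ev_map R N E) by move=> a u v; apply: hom_eq => g /=; rewrite homlin.
  pose ev := mkLin evlin.
  have evilin : linear evinv.
    move=> a p q; apply: (can_inj evK); rewrite evK'; apply: hom_eq => g.
    rewrite homDZ; change (a *: p g + q g = g (a *: evinv p + evinv q)).
    rewrite homlin -[g (evinv p)]/(ev_map E (evinv p) g) -[g (evinv q)]/(ev_map E (evinv q) g).
    by rewrite !evK'.
  pose evi := mkLin evilin.
  have mkf : forall phi : {linear HomR N E -> HomR N E}, (exists g, phi g != 0) ->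
     exists f : {linear N -> N}, (exists x, f x != 0) /\
       forall x (g : HomR N E), phi g x = g (f x).
    move=> phi [g /hom_ne0 [x0 hx0]].
    pose f := mkLin (lin_comp evi (mkLin (lin_comp (dualL E phi) ev))).
    have key : forall x (g : HomR N E), phi g x = g (f x).
      move=> x g'; change (phi g' x = ev_map E (evinv (dualf phi (ev_map E x))) g').
      by rewrite evK'.
    exists f; split; last exact: key.
    by exists x0; apply: contraNneq hx0 => h0; rewrite key h0 hom_app0.
  split.
  + case=> nzN' SC; split; first exact: nzH.
    move=> phi hphi; have [f [fnz key]] := mkf phi hphi.
    move=> g1 g2 e12; apply: hom_eq => x; have [y <-] := SC f fnz x.
    by rewrite -!key e12.
  + case=> nzN' SP; split; first exact: nzH.
    move=> phi hphi h; have [f [fnz key]] := mkf phi hphi.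
    have finj := SP f fnz.
    have [k hk] := (hE.1) N N f (mkLin (homlin h)) finj.
    by exists (toHom k); apply: hom_eq => x; rewrite key /=; exact: hk.
Qed.
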